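(* Let $\chi\in\chi(G)$ be a character and $\lambda\in\Lambda^\chi$. If $C\subset A\subset[n]$ are subsets with $L(C)\subset S^\chi_\lambda$ and $L(A)\subset S^\chi_\lambda$, then $L(B)\subset S^\chi_\lambda$ for every $B$ with $C\subset B\subset A$.
   Context: $G$ diagonalizable over $\mathbf C$ acting on $X=\mathbf A^n_{\mathbf C}$ by $g\cdot x=(\chi_1(g)x_1,\dots,\chi_n(g)x_n)$. $\chi(G)$ characters, $\Gamma(G)$ one-parameter subgroups, pairing $\chi(\lambda(t))=t^{\langle\chi,\lambda\rangle}$; fixed norm on $\Gamma(G)$ from an inner product on $\Gamma(G)_{\mathbf R}$ integral on $\Gamma(G)$. $[n]=\{1,\dots,n\}$. $x$ is $\chi$-unstable if some $\lambda$ with $\lim_{t\to0}\lambda(t)x$ existing has $\langle\chi,\lambda\rangle<0$; for unstable $x$, $\lambda_{\chi,x}$ is the unique indivisible one-parameter subgroup with existing limit minimizing $\langle\chi,\lambda\rangle/\|\lambda\|$ among nonzero such. $\Lambda^\chi=\{\lambda_{\chi,x}\}$, $S^\chi_\lambda=\{x\text{ unstable}:\lambda_{\chi,x}=\lambda\}$. For $S\subset[n]$, $L(S)=\{x:x_i\ne0\iff i\in S\}$. *)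

(* Defs.v *)
From mathcomp Require Import all_boot all_order all_algebra.
From mathcomp Require Import complex.
From mathcomp Require Import all_classical all_reals all_analysis.
Import numFieldNormedType.Exports.
Set Implicit Arguments. Unset Strict Implicit. Unset Printing Implicit Defensive.
Import Order.TTheory GRing.Theory Num.Theory.
Local Open Scope ring_scope.
Local Open Scope classical_set_scope.

(* Model of a diagonalizable group G acting diagonally on A^n_C.
   Gamma(G) = group of one-parameter subgroups, identified with Z^r
   (row vectors 'rV[int]_r).  A character chi of G is recorded through the
   linear form <chi, .> on Gamma(G), i.e. by a vector in Z^r with
   <chi, lam> = \sum_j chi_j lam_j.  The action is given by the characters
   w i (i < n): g . x = (chi_1(g) x_1, ..., chi_n(g) x_n), so that
   lam(t) . x = (t^<chi_1,lam> x_1, ..., t^<chi_n,lam> x_n).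
   The norm on Gamma(G) comes from an inner product given by an integral
   symmetric positive definite matrix Q (Gram matrix on the basis of Gamma). *)

Definition CC (R : realType) : numFieldType := R[i].

Definition pairing (r : nat) (chi lam : 'rV[int]_r) : int :=
  \sum_(j < r) chi 0 j * lam 0 j.

Definition act (R : realType) (n r : nat) (w : 'I_n -> 'rV[int]_r)
  (lam : 'rV[int]_r) (t : CC R) (x : 'rV[CC R]_n) : 'rV[CC R]_n :=
  \row_(i < n) (t ^ (pairing (w i) lam) * x 0 i).

Definition lim_exists (R : realType) (n r : nat) (w : 'I_n -> 'rV[int]_r)
  (lam : 'rV[int]_r) (x : 'rV[CC R]_n) : Prop :=
  exists l : 'rV[CC R]_n,
    (fun t : CC R => act w lam t x) @ (0 : CC R)^' --> l.

Definition unstable (R : realType) (n r : nat) (w : 'I_n -> 'rV[int]_r)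
  (chi : 'rV[int]_r) (x : 'rV[CC R]_n) : Prop :=
  exists lam : 'rV[int]_r, lim_exists w lam x /\ (pairing chi lam < 0)%R.

Definition normQ (R : realType) (r : nat) (Q : 'M[int]_r) (lam : 'rV[int]_r) : R :=
  Num.sqrt (((lam *m Q *m lam^T) 0 0)%:~R).

Definition slope (R : realType) (r : nat) (Q : 'M[int]_r) (chi lam : 'rV[int]_r) : R :=
  (pairing chi lam)%:~R / normQ R Q lam.

Definition indivisible (r : nat) (lam : 'rV[int]_r) : Prop :=
  lam != 0 /\ forall (k : int) (mu : 'rV[int]_r), lam = k *: mu -> k = 1 \/ k = -1.

Definition minimizer (R : realType) (n r : nat) (w : 'I_n -> 'rV[int]_r)
  (Q : 'M[int]_r) (chi lam : 'rV[int]_r) (x : 'rV[CC R]_n) : Prop :=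
  [/\ lam != 0, lim_exists w lam x &
      forall mu : 'rV[int]_r, mu != 0 -> lim_exists w mu x ->
        slope R Q chi lam <= slope R Q chi mu].

Definition in_S (R : realType) (n r : nat) (w : 'I_n -> 'rV[int]_r)
  (Q : 'M[int]_r) (chi lam : 'rV[int]_r) (x : 'rV[CC R]_n) : Prop :=
  [/\ unstable w chi x, indivisible lam, minimizer w Q chi lam x &
      forall mu : 'rV[int]_r, indivisible mu -> minimizer w Q chi mu x -> mu = lam].

Definition in_Lambda (R : realType) (n r : nat) (w : 'I_n -> 'rV[int]_r)
  (Q : 'M[int]_r) (chi lam : 'rV[int]_r) : Prop :=
  exists x : 'rV[CC R]_n, in_S w Q chi lam x.

Definition in_L (R : realType) (n : nat) (S : {set 'I_n}) (x : 'rV[CC R]_n) : Prop :=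
  forall i : 'I_n, x 0 i != 0 <-> i \in S.

Definition inner_product (R : realType) (r : nat) (Q : 'M[int]_r) : Prop :=
  Q^T = Q /\
  forall v : 'rV[R]_r, v != 0 -> 0 < (v *m map_mx (fun z : int => z%:~R) Q *m v^T) 0 0.

(* Main.v *)
Require Import Defs.
From mathcomp Require Import all_boot all_order all_algebra.
From mathcomp Require Import complex.
From mathcomp Require Import all_classical all_reals all_analysis.
Import numFieldNormedType.Exports.
Import Order.TTheory GRing.Theory Num.Theory.
Local Open Scope ring_scope.
Local Open Scope classical_set_scope.

Lemma row_scale_cvg (K : numFieldType) n (c : 'I_n -> K)
  (F : set_system 'rV[K]_n) (FF : Filter F) (l : 'rV[K]_n) :
  F --> l -> (fun v : 'rV[K]_n => \row_j (c j * v 0 j)) @ F --> \row_j (c j * l 0 j).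
Proof.
move=> Fl A [P /= hP sub].
pose P' := fun (i : 'I_1) (j : 'I_n) (z : K) => P i j (c j * z).
have hP' : forall i j, nbhs (l i j) (P' i j).
  move=> i j; have := hP i j; rewrite !mxE (ord1 i) => h.
  exact: (@mulrl_continuous K (c j) (l 0 j) _ h).
have HF : F [set my | forall i j, P' i j (my i j)].
  apply: Fl; exists P' => //.
have S : [set my : 'rV[K]_n | forall i j, P' i j (my i j)] `<=`
   (fun v : 'rV[K]_n => \row_j (c j * v 0 j)) @^-1` A.
  move=> v /= hv; apply: sub => i j /=; rewrite mxE (ord1 i).
  exact: (hv 0 j).
exact: (filterS S HF).
Qed.

Lemma lim_supp (R : realType) (n r : nat) (w : 'I_n -> 'rV[int]_r)
  (mu : 'rV[int]_r) (x y : 'rV[CC R]_n) :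
  (forall i, y 0 i = 0 -> x 0 i = 0) -> lim_exists w mu y -> lim_exists w mu x.
Proof.
move=> hxy [l hl]; pose c j := x 0 j / y 0 j.
exists (\row_j (c j * l 0 j)).
have -> : (fun t => act w mu t x) =
   (fun v => \row_j (c j * v 0 j)) \o (fun t => act w mu t y).
  apply: funext => t /=; apply/rowP => j; rewrite !mxE /c.
  have [y0|yn0] := eqVneq (y 0 j) 0.
    by rewrite (hxy _ y0) y0 !mulr0.
  by rewrite mulrCA divfK.
exact: (@row_scale_cvg (CC R) n c _ _ l hl).
Qed.

Lemma in_L_ex (R : realType) (n : nat) (S : {set 'I_n}) :
  in_L S (\row_i (if i \in S then 1 else 0) : 'rV[CC R]_n).
Proof.
move=> i; rewrite mxE; case: (i \in S); split => //.
by rewrite eqxx.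
Qed.

Theorem lemma3p16 (R : realType) (n r : nat) (w : 'I_n -> 'rV[int]_r)
  (Q : 'M[int]_r) (chi lam : 'rV[int]_r) :
  inner_product R Q ->
  in_Lambda R w Q chi lam ->
  forall A B C : {set 'I_n},
    C \subset A ->
    (forall x : 'rV[CC R]_n, in_L C x -> in_S w Q chi lam x) ->
    (forall x : 'rV[CC R]_n, in_L A x -> in_S w Q chi lam x) ->
    C \subset B -> B \subset A ->
    forall x : 'rV[CC R]_n, in_L B x -> in_S w Q chi lam x.
Proof.
move=> _ _ A B C _ HC HA CB BA x Lx.
have LA := @in_L_ex R n A; have LC := @in_L_ex R n C.
set xA := (X in in_L A X) in LA; set xC := (X in in_L C X) in LC.
have [[muA [limAmu negA]] _ [_ limA _] _] := HA xA LA.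
have [_ indC [nzC limC minC] uniqC] := HC xC LC.
have hAB : forall mu, lim_exists w mu xA -> lim_exists w mu x.
  move=> mu; apply: lim_supp => i hi.
  apply/eqP; apply: contraT => /(Lx i).1 iB.
  have : xA 0 i != 0 by apply/(LA i).2; exact: (fintype.subsetP BA _ iB).
  by move=> /negP H; exfalso; apply: H; apply/eqP; exact: hi.
have hBC : forall mu, lim_exists w mu x -> lim_exists w mu xC.
  move=> mu; apply: lim_supp => i hi.
  apply/eqP; apply: contraT => /(LC i).1 iC.
  have : x 0 i != 0 by apply/(Lx i).2; exact: (fintype.subsetP CB _ iC).
  by move=> /negP H; exfalso; apply: H; apply/eqP; exact: hi.
split => //.
- by exists muA; split => //; exact: hAB.
- split => //; first exact: hAB.
  by move=> mu nz lm; apply: minC => //; exact: hBC.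
- move=> mu imu [nzmu lmu minmu]; apply: uniqC => //; split => //.
    exact: hBC.
  move=> nu nznu lnu; apply: le_trans (minC nu nznu lnu).
  by apply: minmu => //; exact: hAB.
Qed.
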